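(* Let $(x_k)_{k\ge0}$ be an arbitrary sequence of numbers (or indeterminates), and define $a_n=x_n$ if $n=2^k-1$ for some integer $k\ge0$ and $a_n=0$ otherwise. Let $d(n)=\det\left(a_{i+j}\right)_{i,j=0}^{n-1}$ with $d(0)=1$, and for $n\ge1$ let $\alpha(n)=2^{\lceil\log_2 n\rceil}-1$ and $\beta(n)=2n-1-\alpha(n)$. Then for all $n\ge1$, $$d(n)=(-1)^{\binom{\beta(n)}{2}}x_{\alpha(n)}^{\beta(n)}\,d(n-\beta(n)).$$ *)

(* Defs.v *)
(* entries in an arbitrary commutative ring R
   (covers numbers and indeterminates, e.g. R = {poly ...} or mpoly). *)
From mathcomp Require Import all_boot all_order all_algebra.
Set Implicit Arguments. Unset Strict Implicit. Unset Printing Implicit Defensive.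
Import GRing.Theory.
Local Open Scope ring_scope.

(* n = 2^k - 1 for some integer k >= 0.  Any such k satisfies k <= n
   (since 2^k - 1 >= k), so bounding the witness by n is harmless. *)
Definition is_pow2m1 (n : nat) : bool := [exists k : 'I_n.+1, n == (2 ^ k).-1]%N.

Definition aseq (R : comRingType) (x : nat -> R) (n : nat) : R :=
  if is_pow2m1 n then x n else 0.

Definition hdet (R : comRingType) (x : nat -> R) (n : nat) : R :=
  \det (\matrix_(i < n, j < n) aseq x (i + j)%N).

Definition ceil_log2 (n : nat) : nat := up_log 2 n.

Definition alpha (n : nat) : nat := (2 ^ ceil_log2 n).-1.
Definition beta (n : nat) : nat := (2 * n - 1 - alpha n)%N.

(* Main.v *)
Require Import Defs.
From mathcomp Require Import all_boot all_order all_algebra.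
From mathcomp Require Import fingroup perm zify ring.
Import GRing.Theory.
Local Open Scope ring_scope.

Lemma pow2m1_true q : is_pow2m1 (2 ^ q).-1.
Proof.
apply/existsP.
have hq : (q < (2 ^ q).-1.+1)%N by rewrite prednK ?expn_gt0 // ltn_expl.
by exists (Ordinal hq).
Qed.

Lemma pow2m1_false p m : (2 ^ p < m.+1 < 2 ^ p.+1)%N -> is_pow2m1 m = false.
Proof.
move=> /andP[h1 h2]; apply/negbTE/existsP => -[[e _] /eqP /= He].
have Hm : m.+1 = (2 ^ e)%N by rewrite He prednK ?expn_gt0.
rewrite Hm in h1 h2.
rewrite ltn_exp2l // in h1; rewrite ltn_exp2l // in h2.
lia.
Qed.

Lemma aseq_true (R : comRingType) (x : nat -> R) q : aseq x (2 ^ q).-1 = x (2 ^ q).-1.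
Proof. by rewrite /aseq pow2m1_true. Qed.

Lemma aseq_false (R : comRingType) (x : nat -> R) p m :
  (2 ^ p < m.+1 < 2 ^ p.+1)%N -> aseq x m = 0.
Proof. by move=> h; rewrite /aseq (pow2m1_false _ _ h). Qed.

Lemma det_xrow (R : comRingType) n (A : 'M[R]_n) i1 i2 : i1 != i2 ->
  \det (xrow i1 i2 A) = - \det A.
Proof.
by move=> h; rewrite xrowE det_mulmx det_perm odd_tperm h expr1 mulN1r.
Qed.

Definition sig (k r t i : nat) : nat :=
  if ((k <= i < k + t) || (k + r + r - t <= i < k + r + r))%N
  then ((k + k + r + r).-1 - i)%N else i.

Lemma sig0 k r i : sig k r 0 i = i.
Proof. rewrite /sig; case: ifP => //; lia. Qed.

Lemma swap_step (R : comRingType) (f : nat -> nat -> R) k r t : (t < r)%N ->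
  \det (\matrix_(i < k+r+r, j < k+r+r) f (sig k r t.+1 i) j)
  = - \det (\matrix_(i < k+r+r, j < k+r+r) f (sig k r t i) j).
Proof.
move=> ht.
have h1 : (k + t < k + r + r)%N by lia.
have h2 : ((k + r + r).-1 - t < k + r + r)%N by lia.
pose i1 := Ordinal h1; pose i2 := Ordinal h2.
have ne : i1 != i2 by rewrite -val_eqE /=; apply/eqP; lia.
rewrite -(@det_xrow R _ (\matrix_(i < k+r+r, j < k+r+r) f (sig k r t i) j) _ _ ne); congr (\det _); apply/matrixP => i j.
rewrite !mxE permE /=.
case: (eqVneq i i1) => [->|n1] /=.
  by congr f; rewrite /sig; case: ifP; case: ifP; lia.
case: (eqVneq i i2) => [->|n2] /=.
  by congr f; rewrite /sig; case: ifP; case: ifP; lia.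
move: n1 n2; rewrite -!val_eqE /= => /eqP n1 /eqP n2.
by congr f; rewrite /sig; case: ifP; case: ifP; lia.
Qed.

Lemma swap_all (R : comRingType) (f : nat -> nat -> R) k r t : (t <= r)%N ->
  \det (\matrix_(i < k+r+r, j < k+r+r) f (sig k r t i) j)
  = (-1) ^+ t * \det (\matrix_(i < k+r+r, j < k+r+r) f i j).
Proof.
elim: t => [_|t IH ht].
  by rewrite expr0 mul1r; congr (\det _); apply/matrixP => i j; rewrite !mxE sig0.
rewrite swap_step // IH; last lia.
by rewrite exprS mulN1r mulNr.
Qed.

Lemma block_det (R : comRingType) (g : nat -> nat -> R) k r (x0 : R) :
  (forall i j, (i < k + r)%N -> (k + r <= j < k + r + r)%N -> g i j = 0) ->
  (forall i j, (k <= i < k + r)%N -> (j < k)%N -> g i j = 0) ->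
  (forall u v, (u < r)%N -> (v < r)%N -> g (k + u)%N (k + v)%N = x0 *+ (u == v)) ->
  (forall u v, (u < r)%N -> (v < r)%N -> g (k + r + u)%N (k + r + v)%N = x0 *+ (u == v)) ->
  \det (\matrix_(i < k+r+r, j < k+r+r) g i j)
  = \det (\matrix_(i < k, j < k) g i j) * x0 ^+ (r + r).
Proof.
move=> Hur Hdl Hd1 Hd2.
set A := \matrix_(i < k+r+r, j < k+r+r) g i j.
rewrite -(submxK A).
have -> : ursubmx A = 0.
  apply/matrixP => i j; rewrite !mxE /=; apply: Hur; have := ltn_ord i; have := ltn_ord j; lia.
rewrite (det_lblock (ulsubmx A)) -[ulsubmx A]submxK.
have -> : dlsubmx (ulsubmx A) = 0.
  apply/matrixP => i j; rewrite !mxE /=; apply: Hdl; have := ltn_ord i; have := ltn_ord j; lia.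
rewrite (det_ublock (ulsubmx (ulsubmx A))).
have -> : ulsubmx (ulsubmx A) = \matrix_(i < k, j < k) g i j.
  by apply/matrixP => i j; rewrite !mxE.
have -> : drsubmx (ulsubmx A) = x0%:M.
  by apply/matrixP => i j; rewrite !mxE /= Hd1.
have -> : drsubmx A = x0%:M.
  by apply/matrixP => i j; rewrite !mxE /= Hd2.
by rewrite !det_scalar exprD mulrA.
Qed.

Lemma aseq0 (R : comRingType) (x : nat -> R) p m :
  ((2 ^ p < m.+1 < 2 ^ p.+1) || (2 ^ p.+1 < m.+1 < 2 ^ p.+2))%N -> aseq x m = 0.
Proof. by case/orP => h; [exact: (@aseq_false R x p m) | exact: (@aseq_false R x p.+1 m)]. Qed.

Lemma bin2_double r : odd 'C(r + r, 2) = odd r.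
Proof.
have -> : 'C(r + r, 2) = (r * (r + r).-1)%N.
  rewrite bin2; have -> : ((r + r) * (r + r).-1 = (r * (r + r).-1).*2)%N.
    by rewrite -mul2n mulnA mul2n addnn.
  by rewrite half_double.
case: r => [|r] //=.
by rewrite oddM addnS /= oddD addbb /= andbT.
Qed.

Theorem theorem4p1 (R : comRingType) (x : nat -> R) (n : nat) :
  (1 <= n)%N ->
  hdet x n = (-1) ^+ 'C(beta n, 2) * x (alpha n) ^+ beta n * hdet x (n - beta n).
Proof.
move=> n1.
case: (eqVneq n 1) => [->|nn1].
  rewrite /beta /alpha /ceil_log2 up_log1 /= /hdet det_mx00 det_mx11 mxE /= expr0 expr1 mul1r mulr1.
  by rewrite /aseq; have -> : is_pow2m1 0 by apply/existsP; exists ord0.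
have n2 : (1 < n)%N by lia.
have e0 : (0 < up_log 2 n)%N by rewrite up_log_gt0 n2.
set p := (up_log 2 n).-1.
have Ep : up_log 2 n = p.+1 by rewrite /p prednK.
have lo : (2 ^ p < n)%N by exact: up_log_gtn.
have hi : (n <= 2 ^ p.+1)%N by rewrite -Ep; exact: up_logP.
rewrite expnS in hi.
set r := (n - 2 ^ p)%N.
set k := (2 ^ p - r)%N.
have hp : (2 ^ p = k + r)%N by lia.
have En : n = (k + r + r)%N by lia.
have Ealpha : alpha n = (2 ^ p.+1).-1 by rewrite /alpha /ceil_log2 Ep.
have Ebeta : beta n = (r + r)%N by rewrite /beta Ealpha expnS; lia.
rewrite Ealpha Ebeta.
have -> : (n - (r + r))%N = k by lia.
have rpos : (0 < r)%N by lia.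
rewrite /hdet En.
have Hsw := @swap_all R (fun i j => aseq x (i + j)) k r r (leqnn r).
have -> : \det (\matrix_(i < k + r + r, j < k + r + r) aseq x (i + j))
   = (-1) ^+ r * \det (\matrix_(i < k + r + r, j < k + r + r) aseq x (sig k r r i + j)).
  by rewrite Hsw mulrA -exprD -signr_odd addnn odd_double expr0 mul1r.
rewrite (@block_det R (fun i j => aseq x (sig k r r i + j)) k r (x (2 ^ p.+1).-1)).
- have -> : \matrix_(i < k, j < k) aseq x (sig k r r i + j) = \matrix_(i < k, j < k) aseq x (i + j).
    apply/matrixP => i j; rewrite !mxE; congr (aseq x (_ + _)).
    have := ltn_ord i; rewrite /sig; case: ifP => //; lia.
  rewrite -[in RHS]signr_odd bin2_double signr_odd; ring.
- move=> i j hi' hj; apply: (@aseq0 R x p); rewrite !expnS hp /sig; case: ifP => hc; apply/orP; lia.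
- move=> i j hi' hj; apply: (@aseq0 R x p); rewrite !expnS hp /sig; case: ifP => hc; apply/orP; lia.
- move=> u v hu hv; case: (ltngtP u v) => huv.
  + rewrite (@aseq0 R x p) //; rewrite !expnS hp /sig; case: ifP => hc; apply/orP; lia.
  + rewrite (@aseq0 R x p) //; rewrite !expnS hp /sig; case: ifP => hc; apply/orP; lia.
  + have -> : (sig k r r (k + u) + (k + v) = (2 ^ p.+1).-1)%N.
      by rewrite expnS hp /sig; case: ifP => hc; lia.
    by rewrite aseq_true mulr1n.
- move=> u v hu hv; case: (ltngtP u v) => huv.
  + rewrite (@aseq0 R x p) //; rewrite !expnS hp /sig; case: ifP => hc; apply/orP; lia.
  + rewrite (@aseq0 R x p) //; rewrite !expnS hp /sig; case: ifP => hc; apply/orP; lia.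
  + have -> : (sig k r r (k + r + u) + (k + r + v) = (2 ^ p.+1).-1)%N.
      by rewrite expnS hp /sig; case: ifP => hc; lia.
    by rewrite aseq_true mulr1n.
Qed.
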